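(* Let $S$ be an AG-groupoid with a left identity. If $B_{1}$ and $B_{2}$ are bi-ideals of $S$, then the product $B_{1}B_{2}$ is a bi-ideal of $S$.
   Context: An AG-groupoid is a set $S$ with a binary operation satisfying $(ab)c=(cb)a$ for all $a,b,c\in S$. A left identity is an element $e$ with $ea=a$ for all $a\in S$. For nonempty subsets, $AB=\{ab:a\in A,b\in B\}$. A bi-ideal of $S$ is a nonempty subset $B$ with $BB\subseteq B$ and $(BS)B\subseteq B$. *)

(* Defs.v *)
Definition AG_groupoid {S : Type} (mul : S -> S -> S) : Prop :=
  forall a b c : S, mul (mul a b) c = mul (mul c b) a.

Definition left_identity {S : Type} (mul : S -> S -> S) (e : S) : Prop :=
  forall a : S, mul e a = a.

Definition setmul {S : Type} (mul : S -> S -> S) (A B : S -> Prop) : S -> Prop :=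
  fun x => exists a b, A a /\ B b /\ x = mul a b.

Definition setT {S : Type} : S -> Prop := fun _ => True.

Definition subset {S : Type} (A B : S -> Prop) : Prop := forall x, A x -> B x.

Definition bi_ideal {S : Type} (mul : S -> S -> S) (B : S -> Prop) : Prop :=
  (exists x, B x) /\
  subset (setmul mul B B) B /\
  subset (setmul mul (setmul mul B setT) B) B.

(* Main.v *)
Require Import Defs.

Lemma medial (S : Type) (mul : S -> S -> S) (hAG : AG_groupoid mul) a b c d :
  mul (mul a b) (mul c d) = mul (mul a c) (mul b d).
Proof.
  rewrite (hAG a b (mul c d)). rewrite (hAG c d b). apply hAG.
Qed.

Theorem proposition2 (S : Type) (mul : S -> S -> S) (e : S)
  (hAG : AG_groupoid mul) (he : left_identity mul e)
  (B1 B2 : S -> Prop) (h1 : bi_ideal mul B1) (h2 : bi_ideal mul B2) :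
  bi_ideal mul (setmul mul B1 B2).
Proof.
  destruct h1 as [[x1 Hx1] [M1 I1]]. destruct h2 as [[x2 Hx2] [M2 I2]].
  split; [|split].
  - exists (mul x1 x2). exists x1, x2. auto.
  - intros x [p [q [[a1 [b1 [Ha1 [Hb1 ->]]]] [[a2 [b2 [Ha2 [Hb2 ->]]]] ->]]]].
    exists (mul a1 a2), (mul b1 b2). split; [|split].
    + apply M1. exists a1, a2. auto.
    + apply M2. exists b1, b2. auto.
    + apply medial; auto.
  - intros x [p [q [[u [s [[a1 [b1 [Ha1 [Hb1 ->]]]] [_ ->]]]] [[a2 [b2 [Ha2 [Hb2 ->]]]] ->]]]].
    exists (mul (mul a1 e) a2), (mul (mul b1 s) b2). split; [|split].
    + apply I1. exists (mul a1 e), a2. split; [|split; auto].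
      exists a1, e. unfold setT. auto.
    + apply I2. exists (mul b1 s), b2. split; [|split; auto].
      exists b1, s. unfold setT. auto.
    + replace (mul (mul a1 b1) s) with (mul (mul a1 b1) (mul e s)) by (rewrite he; reflexivity).
      rewrite (medial S mul hAG a1 b1 e s).
      apply medial; auto.
Qed.
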